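(* Let $a\in[0.5195,1)$ and $p(z)=(z-a)\prod_{k=1}^{8}(z-z_k)$ with $0.4\le|z_k|\le 1$ for $k=1,\dots,8$, and write $p'(z)=9\prod_{j=1}^{8}(z-\zeta_j)$. Let $r_k=|a-z_k|$, $\rho_j=|a-\zeta_j|$, and suppose $\rho_j>1$ for all $j$. Define $$\Delta=\operatorname{Re}\Big(\frac1a+\sum_{k=1}^{8}\frac1{z_k}\Big),\qquad \sigma=\sum_{k=1}^{8}\frac1{r_k^2}.$$ Then $$\Delta\le-\frac8a+8a+\frac{9}{8a}(1-a^2)\,\sigma.$$ *)

(* Defs.v *)
(* Complex numbers are modelled by an arbitrary
   numClosedFieldType C (which includes the complex numbers). *)
From HB Require Import structures.
From mathcomp Require Import all_boot all_order all_algebra.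

(* Main.v *)
Require Import Defs.
From HB Require Import structures.
From mathcomp Require Import all_boot all_order all_algebra.
From mathcomp Require Import ring.
Import Order.TTheory GRing.Theory Num.Theory.
Local Open Scope ring_scope.

Section Aux.
Variable C : numClosedFieldType.

Lemma logder (I : Type) (r : seq I) (s : I -> C) (x : C) :
  (forall i, x != s i) ->
  (\prod_(i <- r) ('X - (s i)%:P))^`().[x] =
  (\prod_(i <- r) (x - s i)) * \sum_(i <- r) (x - s i)^-1.
Proof.
move=> hx; elim: r => [|i r IH]; first by rewrite !big_nil -/(polyC 1) derivC !hornerE.
rewrite !big_cons derivM derivXsubC mul1r hornerD hornerM IH hornerXsubC horner_prod.
under eq_bigr do rewrite hornerXsubC.
have hi : x - s i != 0 by rewrite subr_eq0.
by rewrite mulrDr mulrAC mulfV // mul1r !mulrA.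
Qed.

Lemma ReaB (a z : C) : a \is Num.real -> 'Re (a - z) = a - 'Re z.
Proof. by move=> ha; rewrite raddfB /= (Creal_ReP _ ha). Qed.
Lemma ImaB (a z : C) : a \is Num.real -> 'Im (a - z) = - 'Im z.
Proof. by move=> ha; rewrite raddfB /= (Creal_ImP _ ha) sub0r. Qed.


Lemma perk (a z : C) : a \is Num.real -> 0 < a -> a <= 1 ->
  2%:R / 5%:R <= `|z| -> `|z| <= 1 -> z != a ->
  'Re (z^-1) <= 'Re z + 9%:R / (8%:R * a) *
     ((1 - a ^+ 2) * (`|a - z| ^+ 2)^-1 - 1 + 2%:R * a * 'Re ((a - z)^-1)).
Proof.
move=> ar a0 a1 hz1 hz2 hza.
rewrite !ReV (ReaB _ _ ar).
have hm : `|z| ^+ 2 = 'Re z ^+ 2 + 'Im z ^+ 2 := normC2_Re_Im z.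
have hN : `|a - z| ^+ 2 = (a - 'Re z) ^+ 2 + 'Im z ^+ 2.
  by rewrite normC2_Re_Im ReaB // ImaB // sqrrN.
have m0 : (2%:R / 5%:R) ^+ 2 <= `|z| ^+ 2.
  by rewrite !expr2; apply: ler_pM => //; rewrite divr_ge0 // ler0n.
have m1 : `|z| ^+ 2 <= 1 by apply: exprn_ile1.
have N0 : 0 < `|a - z| ^+ 2 by rewrite exprn_gt0 // normr_gt0 subr_eq0 eq_sym.
have e : `|a - z| ^+ 2 = a ^+ 2 - 2%:R * a * 'Re z + `|z| ^+ 2 by rewrite hN hm; ring.
have xr : 'Re z \is Num.real := Creal_Re z.
move: m0 m1 N0 e; set x := 'Re z; set m := `|z| ^+ 2; set N := `|a - z| ^+ 2.
move=> m0 m1 N0 e.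
have mpos : 0 < m by apply: lt_le_trans m0; rewrite exprn_gt0 // divr_gt0 // ltr0n.
have mr : m \is Num.real by apply: ger0_real; exact: ltW.
rewrite -subr_ge0.
have -> : x + 9%:R / (8%:R * a) * ((1 - a ^+ 2) * N^-1 - 1 + 2%:R * a * ((a - x) / N)) - x / m
   = (1 - m) * (9%:R * m - 8%:R * a * N * x) / (8%:R * a * m * N).
  rewrite e; field.
  by rewrite -e (gt_eqF N0) (gt_eqF mpos) (gt_eqF a0).
have ar2 : 0 <= a ^+ 2 by rewrite exprn_ge0 // ltW.
have a21 : a ^+ 2 <= 1 by rewrite exprn_ile1 // ltW.
apply: divr_ge0; last first.
  by rewrite !mulr_ge0 // ?ler0n ?ltW.
apply: mulr_ge0; first by rewrite subr_ge0.
have -> : 9%:R * m - 8%:R * a * N * x = (a ^+ 2 + m - 4%:R * a * x) ^+ 2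
   + (1 - a ^+ 2) * (1 + a ^+ 2 + 2%:R * m) + (1 - m) * (m - (2%:R / 5%:R) ^+ 2)
   + 146%:R / 25%:R * (m - (2%:R / 5%:R) ^+ 2) + 59%:R / 625%:R.
  by rewrite e; field.
have hsq : 0 <= (a ^+ 2 + m - 4%:R * a * x) ^+ 2.
  apply: real_exprn_even_ge0 => //; apply: rpredB; first by apply: rpredD => //; apply: rpredX.
  by apply: rpredM => //; apply: rpredM => //; apply: realn.
have h1 : 0 <= (1 - a ^+ 2) * (1 + a ^+ 2 + 2%:R * m).
  apply: mulr_ge0; first by rewrite subr_ge0.
  by apply: addr_ge0; [apply: addr_ge0 | apply: mulr_ge0; rewrite ?ler0n ?ltW].
have h2 : 0 <= (1 - m) * (m - (2%:R / 5%:R) ^+ 2) by apply: mulr_ge0; rewrite subr_ge0.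
have h3 : 0 <= 146%:R / 25%:R * (m - (2%:R / 5%:R) ^+ 2).
  by apply: mulr_ge0; [apply: divr_ge0; rewrite ler0n | rewrite subr_ge0].
apply: addr_ge0; last by apply: divr_ge0; rewrite ler0n.
by apply: addr_ge0 => //; apply: addr_ge0 => //; apply: addr_ge0.
Qed.


Lemma perj (a zeta : C) : a \is Num.real -> 0 < a -> `|zeta| <= 1 ->
  1 < `|a - zeta| -> 'Re ((a - zeta)^-1) <= 'Re (a - zeta).
Proof.
move=> ar a0 hz hv.
have hv2 : 1 < `|a - zeta| ^+ 2 by rewrite exprn_egt1.
have hz2 : `|zeta| ^+ 2 <= 1 by rewrite exprn_ile1.
have key : 2%:R * a * 'Re (a - zeta) = a ^+ 2 + (`|a - zeta| ^+ 2 - `|zeta| ^+ 2).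
  rewrite ReaB // !normC2_Re_Im ReaB // ImaB //; ring.
have Rv : 0 <= 'Re (a - zeta).
  have : 0 <= 2%:R * a * 'Re (a - zeta).
    rewrite key; apply: addr_ge0; first by rewrite exprn_ge0 // ltW.
    by rewrite subr_ge0 ltW // (le_lt_trans hz2 hv2).
  by rewrite pmulr_rge0 // mulr_gt0 // ltr0n.
rewrite ReV ler_pdivrMr; last exact: lt_trans ltr01 hv2.
by rewrite ler_peMr // ltW.
Qed.


Lemma GL (a zeta : C) (z : 'I_8 -> C) : `|a| <= 1 -> (forall k, `|z k| <= 1) ->
  zeta != a -> (forall k, zeta != z k) ->
  (zeta - a)^-1 + \sum_(k < 8) (zeta - z k)^-1 = 0 -> `|zeta| <= 1.
Proof.
move=> ha hz hza hzk E.
have cj (u : C) : (u^-1)^* = `|u| ^- 2 * u.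
  by rewrite fmorphV invC_norm norm_conjC conjCK.
have : `|zeta - a| ^- 2 * (zeta - a) + \sum_(k < 8) `|zeta - z k| ^- 2 * (zeta - z k) = 0.
  rewrite -cj; under eq_bigr do rewrite -cj.
  by rewrite -rmorph_sum -rmorphD E rmorph0.
set c0 := `|zeta - a| ^- 2.
have c0p : 0 < c0 by rewrite invr_gt0 exprn_gt0 // normr_gt0 subr_eq0.
have ckp k : 0 <= `|zeta - z k| ^- 2 by rewrite invr_ge0 exprn_ge0.
rewrite (eq_bigr (fun k => `|zeta - z k| ^- 2 * zeta - `|zeta - z k| ^- 2 * z k));
  last by move=> k _; rewrite mulrBr.
rewrite sumrB -mulr_suml.
set S := \sum_(k < 8) _; set T := \sum_(k < 8) _.
move=> E'.
have E2 : zeta * (c0 + S) = c0 * a + T.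
  by apply/eqP; rewrite -subr_eq0; apply/eqP; rewrite -E'; ring.
have Sp : 0 <= S by apply: sumr_ge0 => k _.
have cp : 0 < c0 + S by apply: (lt_le_trans c0p); rewrite lerDl.
have : `|zeta| * (c0 + S) <= 1 * (c0 + S).
  rewrite -(ger0_norm (ltW cp)) -normrM E2 mul1r (ger0_norm (ltW cp)).
  apply: le_trans (ler_normD _ _) _.
  apply: lerD.
    by rewrite normrM (gtr0_norm c0p) ler_piMr // ltW.
  apply: le_trans (ler_norm_sum _ _ _) _.
  apply: ler_sum => k _.
  by rewrite normrM (ger0_norm (ckp k)) ler_piMr.
by rewrite ler_pM2r.
Qed.

End Aux.

Theorem lemma3p9 (C : numClosedFieldType) (a : C) (z zeta : 'I_8 -> C) :
  a \is Num.real ->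
  5195%:R / 10000%:R <= a -> a < 1 ->
  (forall k : 'I_8, 2%:R / 5%:R <= `|z k| <= 1) ->
  (('X - a%:P) * \prod_(k < 8) ('X - (z k)%:P))^`()
     = 9%:R%:P * \prod_(j < 8) ('X - (zeta j)%:P) ->
  (forall j : 'I_8, 1 < `|a - zeta j|) ->
  'Re (a^-1 + \sum_(k < 8) (z k)^-1)
    <= - (8%:R / a) + 8%:R * a
       + 9%:R / (8%:R * a) * (1 - a ^+ 2) * \sum_(k < 8) (`|a - z k| ^+ 2)^-1.
Proof.
move=> ar ha1 ha2 hz H hzeta.
have a0 : 0 < a by apply: lt_le_trans ha1; rewrite divr_gt0 // ltr0n.
have a1 : a <= 1 := ltW ha2.
have hna : `|a| <= 1 by rewrite ger0_norm // ltW.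
have hz1 k : 2%:R / 5%:R <= `|z k| by case/andP: (hz k).
have hz2 k : `|z k| <= 1 by case/andP: (hz k).
have hzj j : a != zeta j.
  by apply/eqP => e; move: (hzeta j); rewrite e subrr normr0 ltr10.
set Q := \prod_(k < 8) ('X - (z k)%:P) in H *.
set D := \prod_(j < 8) ('X - (zeta j)%:P) in H.
have dp : (('X - a%:P) * Q)^`() = Q + ('X - a%:P) * Q^`().
  by rewrite derivM derivXsubC mul1r.
have Da0 : D.[a] != 0.
  rewrite horner_prod; apply/prodf_neq0 => j _; by rewrite hornerXsubC subr_eq0.
have Qa : Q.[a] = 9%:R * D.[a].
  have := congr1 (horner^~ a) H.
  by rewrite /= dp hornerD hornerM hornerXsubC subrr mul0r addr0 hornerM hornerC.
have Qa0 : Q.[a] != 0 by rewrite Qa mulf_neq0 // pnatr_eq0.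
have hzk k : a != z k.
  move: Qa0; rewrite horner_prod => /prodf_neq0 /(_ k isT).
  by rewrite hornerXsubC subr_eq0.
have E2 : \sum_(k < 8) (a - z k)^-1 = 2%:R^-1 * \sum_(j < 8) (a - zeta j)^-1.
  have := congr1 (fun p => p^`().[a]) H.
  rewrite /= dp derivD derivM derivXsubC mul1r derivM derivC mul0r add0r.
  rewrite !hornerD !hornerM hornerXsubC subrr mul0r addr0 hornerC.
  rewrite /Q /D !logder // -/Q -/D.
  have hQ : Q.[a] = \prod_(k < 8) (a - z k).
    by rewrite horner_prod; apply: eq_bigr => k _; rewrite hornerXsubC.
  have hD : D.[a] = \prod_(j < 8) (a - zeta j).
    by rewrite horner_prod; apply: eq_bigr => k _; rewrite hornerXsubC.
  rewrite -hQ -hD Qa.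
  set S1 := \sum_(k < 8) _; set T := \sum_(j < 8) _ => e.
  have h : 9%:R * D.[a] * (2%:R * S1 - T) = 0.
    transitivity ((9%:R * D.[a] * S1 + 9%:R * D.[a] * S1) - 9%:R * (D.[a] * T)).
      by ring.
    by rewrite e subrr.
  move/eqP: h; rewrite mulf_eq0 mulf_eq0 pnatr_eq0 (negbTE Da0) /= subr_eq0 => /eqP <-.
  by rewrite mulrA mulVf ?mul1r // pnatr_eq0.
have sz : size (index_enum 'I_8) = 8 by rewrite -[index_enum _]enumT size_enum_ord.
have E3 : 8%:R * (a + \sum_(k < 8) z k) = 9%:R * \sum_(j < 8) zeta j.
  have hQs : Q = \prod_(c <- map z (index_enum 'I_8)) ('X - c%:P) by rewrite big_map.
  have hDs : D = \prod_(c <- map zeta (index_enum 'I_8)) ('X - c%:P) by rewrite big_map.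
  have hP : ('X - a%:P) * Q = \prod_(c <- a :: map z (index_enum 'I_8)) ('X - c%:P).
    by rewrite big_cons hQs.
  have c1 := coefPn_prod_XsubC (ps := a :: map z (index_enum 'I_8)).
  have c2 := coefPn_prod_XsubC (ps := map zeta (index_enum 'I_8)).
  rewrite /= size_map sz in c1; rewrite size_map sz in c2.
  have := congr1 (fun p : {poly C} => p`_7) H.
  rewrite /= coef_deriv coefCM hP hDs c1 // c2 // big_cons !big_map => e.
  rewrite -[- _ *+ 8]mulr_natl in e.
  by rewrite -[LHS]opprK -mulrN e mulrN opprK.
have hGL j : `|zeta j| <= 1.
  case: (boolP [forall k, zeta j != z k]) => [/forallP hk | ]; last first.
    by move/forallPn => [k]; rewrite negbK => /eqP ->; exact: hz2.
  have hja : zeta j - a != 0 by rewrite subr_eq0 eq_sym.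
  apply: (@GL _ a (zeta j) z) => //; first by rewrite eq_sym.
  have Dz : D.[zeta j] = 0.
    rewrite horner_prod; apply/eqP/prodf_eq0; exists j => //.
    by rewrite hornerXsubC subrr.
  have hQz : Q.[zeta j] = \prod_(k < 8) (zeta j - z k).
    by rewrite horner_prod; apply: eq_bigr => k _; rewrite hornerXsubC.
  have P0 : \prod_(k < 8) (zeta j - z k) != 0.
    by apply/prodf_neq0 => k _; rewrite subr_eq0.
  have := congr1 (horner^~ (zeta j)) H.
  rewrite /= dp hornerD hornerM hornerXsubC hornerM Dz mulr0 hQz /Q logder //.
  set P := \prod_(k < 8) _; set S := \sum_(k < 8) _ => e.
  have : P * (zeta j - a) * ((zeta j - a)^-1 + S) = 0.
    by rewrite -e; field.
  by move/eqP; rewrite !mulf_eq0 (negbTE P0) (negbTE hja) /= => /eqP.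
have ReaI : 'Re a^-1 = a^-1 by apply/Creal_ReP; rewrite rpredV.
rewrite raddfD raddf_sum /= ReaI.
apply: le_trans.
  apply: lerD (lexx _) _.
  apply: ler_sum => k _.
  apply: (@perk _ a (z k) ar a0 a1 (hz1 k) (hz2 k)).
  by rewrite eq_sym hzk.
rewrite big_split /= -mulr_sumr big_split /= sumrB -!mulr_sumr sumr_const card_ord.
rewrite -!raddf_sum /= E2.
have Ez : \sum_(k < 8) z k = 9%:R / 8%:R * \sum_(j < 8) zeta j - a.
  have h8 : (8%:R : C) != 0 by rewrite pnatr_eq0.
  apply: (mulfI h8); rewrite mulrBr mulrA mulrCA mulfV // mulr1 -E3; ring.
rewrite Ez raddfB /= (Creal_ReP a ar) ReMl; last by rewrite rpredM ?rpredV ?realn.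
rewrite ReMl; last by rewrite rpredV ?realn.
have hY : 'Re (\sum_(j < 8) (a - zeta j)^-1) <= a *+ 8 - 'Re (\sum_(j < 8) zeta j).
  rewrite raddf_sum raddf_sum /=.
  apply: le_trans (ler_sum _ (fun j _ => @perj _ a (zeta j) ar a0 (hGL j) (hzeta j))) _.
  rewrite (eq_bigr (fun j => a - 'Re (zeta j))); last by move=> j _; rewrite ReaB.
  by rewrite sumrB sumr_const card_ord.
move: hY.
set X := 'Re (\sum_(j < 8) zeta j); set Y := 'Re (\sum_(j < 8) (a - zeta j)^-1).
set sg := \sum_(k < 8) _.
move=> hY.
rewrite -subr_ge0.
have an0 : a != 0 by rewrite gt_eqF.
rewrite (_ : _ - _ = 9%:R / 8%:R * ((a *+ 8 - X) - Y)); last by field.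
by apply: mulr_ge0; [apply: divr_ge0; rewrite ler0n | rewrite subr_ge0].
Qed.
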